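(* Let $d\ge1$, let $(\varphi_n)_{n=0}^\infty$ with $\varphi_0\equiv1$ be a basis in $H(\mathbb{C}^d)$, and let $K\subset K_1$ be compact subsets of $\mathbb{C}^d$ such that for every entire function $h=\sum_{n=0}^\infty h_n\varphi_n$ we have $\sum_{n=0}^\infty|h_n|\,|\varphi_n|_K\le |h|_{K_1}$. Suppose $G\supset K_1$ is a domain in $\mathbb{C}^d$ such that $(\varphi_n)$ (restricted to $G$) is also a basis of $H(G)$. Then for every bounded holomorphic function $f$ on $G$ with expansion $f=\sum_{n=0}^\infty f_n\varphi_n$ in $H(G)$, $$\sum_{n=0}^\infty |f_n|\,|\varphi_n|_K\le \sup_{z\in G}|f(z)|.$$
   Context: $H(G)$ is the space of holomorphic functions on a domain $G$ with the topology of uniform convergence on compact subsets; a basis of $H(G)$ is a sequence such that every $f\in H(G)$ has a unique expansion $f=\sum f_n\varphi_n$ converging uniformly on compact subsets of $G$. $|f|_K:=\sup_K|f|$. *)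

(* Defs.v *)
From Stdlib Require Fin.
From Stdlib Require Import Reals ClassicalEpsilon.
Open Scope R_scope.

Definition CC := (R * R)%type.
Definition CC0 : CC := (0, 0).
Definition CC1 : CC := (1, 0).
Definition Cadd (a b : CC) : CC := (fst a + fst b, snd a + snd b).
Definition Csub (a b : CC) : CC := (fst a - fst b, snd a - snd b).
Definition Cmul (a b : CC) : CC :=
  (fst a * fst b - snd a * snd b, fst a * snd b + snd a * fst b).
Definition Cnorm (a : CC) : R := sqrt (fst a * fst a + snd a * snd a).

Definition Cd (d : nat) := Fin.t d -> CC.

Fixpoint Fsum (d : nat) : (Fin.t d -> CC) -> CC :=
  match d return (Fin.t d -> CC) -> CC with
  | O => fun _ => CC0
  | S d' => fun a => Cadd (a Fin.F1) (Fsum d' (fun i => a (Fin.FS i)))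
  end.

Fixpoint Fmax (d : nat) : (Fin.t d -> R) -> R :=
  match d return (Fin.t d -> R) -> R with
  | O => fun _ => 0
  | S d' => fun a => Rmax (a Fin.F1) (Fmax d' (fun i => a (Fin.FS i)))
  end.

Definition dist {d : nat} (z w : Cd d) : R :=
  Fmax d (fun i => Cnorm (Csub (w i) (z i))).

Definition is_open {d : nat} (U : Cd d -> Prop) : Prop :=
  forall z, U z -> exists r, 0 < r /\ forall w, dist z w < r -> U w.

Definition is_connected {d : nat} (U : Cd d -> Prop) : Prop :=
  forall A B : Cd d -> Prop, is_open A -> is_open B ->
    (forall z, U z -> A z \/ B z) ->
    (forall z, U z -> A z -> B z -> False) ->
    (exists z, U z /\ A z) -> (exists z, U z /\ B z) -> False.

Definition is_domain {d : nat} (G : Cd d -> Prop) : Prop :=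
  is_open G /\ (exists z, G z) /\ is_connected G.

Definition is_compact {d : nat} (K : Cd d -> Prop) : Prop :=
  forall u : nat -> Cd d, (forall n, K (u n)) ->
    exists sub : nat -> nat, (forall n, (sub n < sub (S n))%nat) /\
      exists l, K l /\
        forall eps, 0 < eps -> exists N, forall n, (N <= n)%nat ->
          dist (u (sub n)) l < eps.

Definition Cdiff_at {d : nat} (f : Cd d -> CC) (z : Cd d) : Prop :=
  exists a : Fin.t d -> CC,
    forall eps, 0 < eps -> exists delta, 0 < delta /\
      forall w, dist z w < delta ->
        Cnorm (Csub (f w) (Cadd (f z) (Fsum d (fun i => Cmul (a i) (Csub (w i) (z i))))))
          <= eps * dist z w.

Definition holo {d : nat} (G : Cd d -> Prop) (f : Cd d -> CC) : Prop :=
  is_open G /\ forall z, G z -> Cdiff_at f z.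

Definition whole {d : nat} : Cd d -> Prop := fun _ => True.

Fixpoint Cpsum (a : nat -> CC) (N : nat) : CC :=
  match N with
  | O => a O
  | S N' => Cadd (Cpsum a N') (a N)
  end.

Definition expands {d : nat} (G : Cd d -> Prop) (phi : nat -> Cd d -> CC)
  (c : nat -> CC) (f : Cd d -> CC) : Prop :=
  forall K, is_compact K -> (forall z, K z -> G z) ->
    forall eps, 0 < eps -> exists N, forall n, (N <= n)%nat ->
      forall z, K z -> Cnorm (Csub (Cpsum (fun k => Cmul (c k) (phi k z)) n) (f z)) <= eps.

Definition is_basis {d : nat} (G : Cd d -> Prop) (phi : nat -> Cd d -> CC) : Prop :=
  (forall n, holo G (phi n)) /\
  forall f, holo G f ->
    exists c, expands G phi c f /\ forall c', expands G phi c' f -> c' = c.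

(* |g|_K = sup_K |g|, with the convention |g|_emptyset = 0 *)
Definition supnorm {d : nat} (K : Cd d -> Prop) (g : Cd d -> CC) : R :=
  epsilon (inhabits 0)
    (fun s => is_lub (fun x => x = 0 \/ exists z, K z /\ x = Cnorm (g z)) s).

(* Main.v *)
Require Import Defs.
From Stdlib Require Import Reals.
From Stdlib Require Import Lra Lia Psatz ClassicalEpsilon.
Open Scope R_scope.

Lemma pair_ext (p q : CC) : fst p = fst q -> snd p = snd q -> p = q.
Proof. destruct p, q; simpl; intros; subst; auto. Qed.

Lemma Cnorm_pos x : 0 <= Cnorm x.
Proof. apply sqrt_pos. Qed.

Lemma Cnorm_add x y : Cnorm (Cadd x y) <= Cnorm x + Cnorm y.
Proof.
  destruct x as [a b], y as [c d]. unfold Cnorm, Cadd; simpl.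
  set (A := a*a+b*b). set (C := c*c+d*d).
  assert (hA : 0 <= A) by (unfold A; nra).
  assert (hC : 0 <= C) by (unfold C; nra).
  pose proof (sqrt_pos A) as sA. pose proof (sqrt_pos C) as sC.
  pose proof (sqrt_sqrt A hA) as eA. pose proof (sqrt_sqrt C hC) as eC.
  replace (sqrt A + sqrt C) with (sqrt (Rsqr (sqrt A + sqrt C))) by (apply sqrt_Rsqr; lra).
  apply sqrt_le_1_alt. unfold Rsqr.
  assert (hcs : (a*c+b*d)*(a*c+b*d) <= A*C) by (unfold A, C; pose proof (pow2_ge_0 (a*d-b*c)); nra).
  assert (hp : a*c+b*d <= sqrt A * sqrt C).
  { assert (e : (sqrt A * sqrt C) * (sqrt A * sqrt C) = A * C) by (transitivity ((sqrt A * sqrt A) * (sqrt C * sqrt C)); [ring | rewrite eA, eC; ring]).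
    pose proof (Rmult_le_pos _ _ sA sC). nra. }
  unfold A, C in *. nra.
Qed.

Lemma Cnorm_mul x y : Cnorm (Cmul x y) = Cnorm x * Cnorm y.
Proof.
  destruct x as [a b], y as [c d]. unfold Cnorm, Cmul; simpl.
  rewrite <- sqrt_mult by nra. f_equal. ring.
Qed.

Lemma Cnorm_sub_self x : Cnorm (Csub x x) = 0.
Proof. unfold Cnorm, Csub; simpl. replace (_ * _ + _ * _) with 0 by ring. apply sqrt_0. Qed.

Lemma Fmax_pos d (u : Fin.t d -> R) : (forall i, 0 <= u i) -> 0 <= Fmax d u.
Proof.
  induction d; simpl; intros H; [lra|].
  eapply Rle_trans; [apply (IHd (fun i => u (Fin.FS i))); auto | apply Rmax_r].
Qed.

Lemma dist_pos d (z w : Cd d) : 0 <= Defs.dist z w.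
Proof. unfold Defs.dist. apply Fmax_pos. intros; apply Cnorm_pos. Qed.

Lemma Fsum_add d (a b x : Fin.t d -> CC) :
  Fsum d (fun i => Cmul (Cadd (a i) (b i)) (x i)) =
  Cadd (Fsum d (fun i => Cmul (a i) (x i))) (Fsum d (fun i => Cmul (b i) (x i))).
Proof.
  induction d; simpl.
  - apply pair_ext; unfold Cadd, CC0; simpl; ring.
  - rewrite (IHd (fun i => a (Fin.FS i)) (fun i => b (Fin.FS i)) (fun i => x (Fin.FS i))).
    apply pair_ext; unfold Cadd, Cmul; simpl; ring.
Qed.

Lemma Fsum_scal d (k : CC) (a x : Fin.t d -> CC) :
  Fsum d (fun i => Cmul (Cmul k (a i)) (x i)) = Cmul k (Fsum d (fun i => Cmul (a i) (x i))).
Proof.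
  induction d; simpl.
  - apply pair_ext; unfold Cmul, CC0; simpl; ring.
  - rewrite (IHd (fun i => a (Fin.FS i)) (fun i => x (Fin.FS i))).
    apply pair_ext; unfold Cadd, Cmul; simpl; ring.
Qed.

Lemma Cdiff_add d (f g : Cd d -> CC) z :
  Cdiff_at f z -> Cdiff_at g z -> Cdiff_at (fun w => Cadd (f w) (g w)) z.
Proof.
  intros [a Ha] [b Hb]. exists (fun i => Cadd (a i) (b i)). intros eps he.
  destruct (Ha (eps/2)) as [d1 [hd1 H1]]; [lra|].
  destruct (Hb (eps/2)) as [d2 [hd2 H2]]; [lra|].
  exists (Rmin d1 d2). split; [apply Rmin_pos; auto|]. intros w hw.
  rewrite Fsum_add.
  set (X := Csub (f w) (Cadd (f z) (Fsum d (fun i => Cmul (a i) (Csub (w i) (z i)))))).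
  set (Y := Csub (g w) (Cadd (g z) (Fsum d (fun i => Cmul (b i) (Csub (w i) (z i)))))).
  assert (e : Csub (Cadd (f w) (g w)) (Cadd (Cadd (f z) (g z))
      (Cadd (Fsum d (fun i => Cmul (a i) (Csub (w i) (z i))))
            (Fsum d (fun i => Cmul (b i) (Csub (w i) (z i)))))) = Cadd X Y).
  { unfold X, Y. apply pair_ext; unfold Cadd, Csub; simpl; ring. }
  rewrite e. eapply Rle_trans; [apply Cnorm_add|].
  pose proof (H1 w (Rlt_le_trans _ _ _ hw (Rmin_l _ _))).
  pose proof (H2 w (Rlt_le_trans _ _ _ hw (Rmin_r _ _))).
  fold X in H. fold Y in H0. lra.
Qed.

Lemma Cdiff_scal d (k : CC) (f : Cd d -> CC) z :
  Cdiff_at f z -> Cdiff_at (fun w => Cmul k (f w)) z.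
Proof.
  intros [a Ha]. exists (fun i => Cmul k (a i)). intros eps he.
  pose proof (Cnorm_pos k) as hk.
  destruct (Ha (eps/(Cnorm k + 1))) as [d1 [hd1 H1]].
  { apply Rdiv_lt_0_compat; lra. }
  exists d1. split; auto. intros w hw.
  rewrite Fsum_scal.
  set (X := Csub (f w) (Cadd (f z) (Fsum d (fun i => Cmul (a i) (Csub (w i) (z i)))))).
  assert (e : Csub (Cmul k (f w)) (Cadd (Cmul k (f z))
      (Cmul k (Fsum d (fun i => Cmul (a i) (Csub (w i) (z i)))))) = Cmul k X).
  { unfold X. apply pair_ext; unfold Cadd, Csub, Cmul; simpl; ring. }
  rewrite e, Cnorm_mul. specialize (H1 w hw). fold X in H1.
  pose proof (dist_pos d z w). pose proof (Cnorm_pos X).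
  assert (q : Cnorm k * (eps / (Cnorm k + 1)) <= eps).
  { unfold Rdiv. rewrite <- Rmult_assoc. apply Rle_trans with ((Cnorm k + 1) * eps * / (Cnorm k + 1)).
    - apply Rmult_le_compat_r; [left; apply Rinv_0_lt_compat; lra | nra].
    - right. field. lra. }
  apply Rle_trans with (Cnorm k * (eps / (Cnorm k + 1) * Defs.dist z w)).
  - apply Rmult_le_compat_l; auto.
  - rewrite <- Rmult_assoc. apply Rmult_le_compat_r; auto.
Qed.

Lemma Cpsum_diff d (c : nat -> CC) (phi : nat -> Cd d -> CC) z :
  (forall k, Cdiff_at (phi k) z) ->
  forall N, Cdiff_at (fun w => Cpsum (fun k => Cmul (c k) (phi k w)) N) z.
Proof.
  intros H N. induction N; simpl.
  - apply Cdiff_scal; auto.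
  - apply (Cdiff_add d (fun w => Cpsum (fun k => Cmul (c k) (phi k w)) N)); auto.
    apply Cdiff_scal; auto.
Qed.

Lemma Cpsum_ext u v n : (forall k, (k <= n)%nat -> u k = v k) -> Cpsum u n = Cpsum v n.
Proof.
  induction n; simpl; intros H.
  - apply H; lia.
  - rewrite IHn by (intros; apply H; lia). rewrite H by lia. reflexivity.
Qed.

Lemma Cpsum_tail u N n : (N <= n)%nat ->
  (forall k, (N < k)%nat -> fst (u k) = 0 /\ snd (u k) = 0) -> Cpsum u n = Cpsum u N.
Proof.
  intros Hle H. induction Hle; auto. simpl. rewrite <- IHHle.
  destruct (H (S m)) as [h1 h2]; [lia|].
  apply pair_ext; unfold Cadd; simpl; rewrite h1 || rewrite h2; ring.
Qed.

Theorem mainTheorem4 (d : nat) (hd : (1 <= d)%nat)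
  (phi : nat -> Cd d -> CC)
  (hphi0 : forall z, phi O z = CC1)
  (hbasis : is_basis whole phi)
  (K K1 : Cd d -> Prop)
  (hK : is_compact K) (hK1 : is_compact K1) (hKK1 : forall z, K z -> K1 z)
  (hineq : forall (h : Cd d -> CC) (c : nat -> CC),
     holo whole h -> expands whole phi c h ->
     forall N, sum_f_R0 (fun n => Cnorm (c n) * supnorm K (phi n)) N <= supnorm K1 h)
  (G : Cd d -> Prop) (hG : is_domain G) (hK1G : forall z, K1 z -> G z)
  (hbasisG : is_basis G phi)
  (f : Cd d -> CC) (hf : holo G f) (hfb : exists M, forall z, G z -> Cnorm (f z) <= M)
  (c : nat -> CC) (hc : expands G phi c f) :
  forall N, sum_f_R0 (fun n => Cnorm (c n) * supnorm K (phi n)) N <= supnorm G f.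
Proof.
  intros N'. destruct hfb as [M hM].
  assert (HG : is_lub (fun x => x = 0 \/ exists z, G z /\ x = Cnorm (f z)) (supnorm G f)).
  { unfold supnorm. apply epsilon_spec.
    destruct (completeness (fun x => x = 0 \/ exists z, G z /\ x = Cnorm (f z))) as [m Hm].
    - exists (Rmax M 0). intros x [->|[z [Gz ->]]]; [apply Rmax_r|].
      eapply Rle_trans; [apply hM; auto | apply Rmax_l].
    - exists 0; auto.
    - exists m; auto. }
  set (sG := supnorm G f) in *.
  assert (sG0 : 0 <= sG) by (apply HG; auto).
  assert (sGf : forall z, G z -> Cnorm (f z) <= sG) by (intros z Gz; apply HG; eauto).
  set (S' := sum_f_R0 (fun n => Cnorm (c n) * supnorm K (phi n)) N').
  assert (key : forall eps, 0 < eps -> S' <= sG + eps).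
  { intros eps he.
    destruct (hc K1 hK1 hK1G eps he) as [N0 HN0].
    set (N := Nat.max N0 N').
    set (SN := fun w => Cpsum (fun k => Cmul (c k) (phi k w)) N).
    set (c' := fun k => if Nat.leb k N then c k else CC0).
    assert (hol : holo whole SN).
    { split.
      - intros z _. exists 1. split; [lra|]. intros; exact I.
      - intros z _. unfold SN. apply Cpsum_diff. intros k.
        destruct hbasis as [hb _]. apply (proj2 (hb k)). exact I. }
    assert (exps : expands whole phi c' SN).
    { intros K' _ _ e he'. exists N. intros n hn z _.
      rewrite (Cpsum_tail _ N n hn).
      - rewrite (Cpsum_ext _ (fun k => Cmul (c k) (phi k z)) N).
        + unfold SN. rewrite Cnorm_sub_self. lra.
        + intros k hk. unfold c'. replace (Nat.leb k N) with true; auto.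
          symmetry. apply Nat.leb_le. auto.
      - intros k hk. unfold c'. replace (Nat.leb k N) with false.
        + unfold Cmul, CC0; simpl; split; ring.
        + symmetry. apply Nat.leb_gt. auto. }
    pose proof (hineq SN c' hol exps N') as H1.
    rewrite (sum_eq _ (fun n => Cnorm (c n) * supnorm K (phi n))) in H1.
    2:{ intros i hi. unfold c'. replace (Nat.leb i N) with true; auto.
        symmetry. apply Nat.leb_le. unfold N. lia. }
    fold S' in H1.
    assert (ub : is_upper_bound (fun x => x = 0 \/ exists z, K1 z /\ x = Cnorm (SN z)) (sG + eps)).
    { intros x [->|[z [Kz ->]]]; [lra|].
      assert (hz := HN0 N (Nat.le_max_l _ _) z Kz).
      assert (e : SN z = Cadd (Csub (SN z) (f z)) (f z)).
      { apply pair_ext; unfold Cadd, Csub; simpl; ring. }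
      rewrite e. eapply Rle_trans; [apply Cnorm_add|].
      pose proof (sGf z (hK1G z Kz)). unfold SN in *. lra. }
    assert (HK1 : is_lub (fun x => x = 0 \/ exists z, K1 z /\ x = Cnorm (SN z)) (supnorm K1 SN)).
    { unfold supnorm. apply epsilon_spec.
      destruct (completeness (fun x => x = 0 \/ exists z, K1 z /\ x = Cnorm (SN z))) as [m Hm].
      - exists (sG + eps). exact ub.
      - exists 0; auto.
      - exists m; auto. }
    pose proof (proj2 HK1 _ ub). lra. }
  apply Rnot_lt_le. intro hlt.
  pose proof (key ((S' - sG)/2)). lra.
Qed.
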